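(* Let $\ast$ be a continuous $t$-norm and let $\{(X_n,M_n,\ast)\}_{n\in\mathbb N}$ be a sequence of nonempty compact non-Archimedean fuzzy metric spaces satisfying: (1) $\ast$ satisfies (TN1); (2) there exists a nondecreasing left-continuous function $C:(0,\infty)\to(0,1]$ with $0<C(s)\le\mathrm{diam}_s(X_n)$ for all $s>0$ and all $n\in\mathbb N$; (3) for every $t>0$ and $0<\varepsilon<1$ there is $N(\varepsilon,t)\in\mathbb N$ with $\mathrm{Cov}(X_n,\varepsilon,t)\le N(\varepsilon,t)$ for all $n$; (4) for every $t>0$ and $0<\varepsilon<1$, with $N=N(\varepsilon,t)$, there exist, for each $n$, a $(t,\varepsilon)$-net $\{x_i^n\}_{i=1}^N$ in $X_n$ such that for all $n,m\in\mathbb N$, all $s>t$ and all $i,j\in\{1,\dots,N\}$: if $M_n(x_i^n,x_j^n,s)<M_m(x_i^m,x_j^m,s)$ then $$\frac{M_n(x_i^n,x_j^n,s)}{M_m(x_i^m,x_j^m,s)\ast(1-\varepsilon)}\ge\frac{M_n(x_i^n,x_j^n,t)}{M_m(x_i^m,x_j^m,t)\ast(1-\varepsilon)}.$$ Then for every $t>0$ and $0<\varepsilon<1$ there is a subsequence $\{(X_{n_k},M_{n_k},\ast)\}_{k\in\mathbb N}$ with $M_{GH}(X_{n_j},X_{n_k},t)>(1-\varepsilon)\ast(1-\varepsilon)$ for all $j,k\in\mathbb N$.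
   Context: A continuous $t$-norm is a binary operation $\ast:[0,1]\times[0,1]\to[0,1]$ which is associative, commutative, continuous, satisfies $a\ast 1=a$ for all $a$, and is monotone ($a\ast b\le c\ast d$ whenever $a\le c$, $b\le d$). Property (TN1): $a-a\ast b\ge a\ast(1-b)$ for all $a,b\in[0,1]$. A fuzzy metric space $(X,M,\ast)$ consists of a set $X$, a continuous $t$-norm $\ast$ and a map $M:X\times X\times[0,\infty)\to[0,1]$ such that for all $x,y,z\in X$ and $t,s>0$: (KM1) $M(x,y,0)=0$; (KM2) $M(x,y,t)=1$ for all $t>0$ iff $x=y$; (KM3) $M(x,y,t)=M(y,x,t)$; (KM4) $M(x,y,t)\ast M(y,z,s)\le M(x,z,t+s)$; (KM5) $M(x,y,\cdot):[0,\infty)\to[0,1]$ is left continuous. It is non-Archimedean if moreover $M(x,z,\max\{t,s\})\ge M(x,y,t)\ast M(y,z,s)$ for all $x,y,z\in X$, $t,s>0$. The balls are $B(x,\varepsilon,t)=\{y: M(x,y,t)>1-\varepsilon\}$ ($0<\varepsilon<1$, $t>0$); they generate the topology, and ''compact'' refers to it. For nonempty compact $A,B\subseteq X$: $H_M(A,B,t)=\min\{\inf_{a\in A}\sup_{b\in B}M(a,b,t),\ \inf_{b\in B}\sup_{a\in A}M(a,b,t)\}$. A fuzzy metric on the disjoint union $X\sqcup Y$ is admissible if it restricts to the given fuzzy metrics on $X$ and $Y$; $M_{GH}(X,Y,t)=\sup\{H_M(X,Y,t): M$ admissible non-Archimedean fuzzy metric on $X\sqcup Y$ with $t$-norm $\ast\}$.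 A family $\{x_i\}_{i=1}^N$ in $X$ (repetitions allowed) is a $(t,\varepsilon)$-net if for each $x\in X$ there is $i$ with $M(x,x_i,t)>1-\varepsilon$. The cover number $\mathrm{Cov}(X,\varepsilon,t)$ is the minimal cardinality of a set $C\subseteq X$ with $X=\bigcup_{c\in C}B(c,\varepsilon,t)$. The $s$-diameter is $\mathrm{diam}_s(X)=\inf\{M(x,y,s): x,y\in X\}$. *)

(* Defs.v *)
From Stdlib Require Import Reals Lra List.
From Coquelicot Require Import Coquelicot.
Open Scope R_scope.

Definition in01 (a : R) : Prop := 0 <= a <= 1.

(* A continuous t-norm, as a binary operation on [0,1] (values outside
   [0,1]x[0,1] are irrelevant). *)
Definition cont_tnorm (T : R -> R -> R) : Prop :=
  (forall a b, in01 a -> in01 b -> in01 (T a b)) /\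
  (forall a b c, in01 a -> in01 b -> in01 c -> T a (T b c) = T (T a b) c) /\
  (forall a b, in01 a -> in01 b -> T a b = T b a) /\
  (forall a b, in01 a -> in01 b -> forall e, 0 < e -> exists d, 0 < d /\
     forall a' b', in01 a' -> in01 b' -> Rabs (a' - a) < d -> Rabs (b' - b) < d ->
       Rabs (T a' b' - T a b) < e) /\
  (forall a, in01 a -> T a 1 = a) /\
  (forall a b c d, in01 a -> in01 b -> in01 c -> in01 d -> a <= c -> b <= d ->
     T a b <= T c d).

Definition TN1 (T : R -> R -> R) : Prop :=
  forall a b, in01 a -> in01 b -> a - T a b >= T a (1 - b).

(* Fuzzy metric M : X -> X -> [0,oo) -> [0,1]; only arguments t >= 0 matter. *)
Definition fuzzy_metric {X : Type} (M : X -> X -> R -> R) (T : R -> R -> R) : Prop :=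
  (forall x y t, 0 <= t -> in01 (M x y t)) /\
  (forall x y, M x y 0 = 0) /\
  (forall x y, (forall t, 0 < t -> M x y t = 1) <-> x = y) /\
  (forall x y t, 0 < t -> M x y t = M y x t) /\
  (forall x y z t s, 0 < t -> 0 < s -> T (M x y t) (M y z s) <= M x z (t + s)) /\
  (forall x y t, 0 < t -> forall e, 0 < e -> exists d, 0 < d /\
     forall u, 0 <= u -> t - d < u -> u <= t -> Rabs (M x y u - M x y t) < e).

Definition non_archimedean {X : Type} (M : X -> X -> R -> R) (T : R -> R -> R) : Prop :=
  forall x y z t s, 0 < t -> 0 < s -> M x z (Rmax t s) >= T (M x y t) (M y z s).

Definition ball_f {X : Type} (M : X -> X -> R -> R) (x : X) (eps t : R) (y : X) : Prop :=
  M x y t > 1 - eps.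

Definition fopen {X : Type} (M : X -> X -> R -> R) (U : X -> Prop) : Prop :=
  forall x, U x -> exists eps t, 0 < eps < 1 /\ 0 < t /\
    forall y, ball_f M x eps t y -> U y.

Definition fcompact {X : Type} (M : X -> X -> R -> R) : Prop :=
  forall (I : Type) (U : I -> X -> Prop), (forall i, fopen M (U i)) ->
    (forall x, exists i, U i x) ->
    exists l : list I, forall x, exists i, In i l /\ U i x.

(* H_M(X,Y,t) for a fuzzy metric M on X + Y (disjoint union), A = X, B = Y *)
Definition H_M {X Y : Type} (M : (X + Y) -> (X + Y) -> R -> R) (t : R) : R :=
  Rmin
    (real (Glb_Rbar (fun r => exists a : X,
       r = real (Lub_Rbar (fun u => exists b : Y, u = M (inl a) (inr b) t)))))
    (real (Glb_Rbar (fun r => exists b : Y,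
       r = real (Lub_Rbar (fun u => exists a : X, u = M (inl a) (inr b) t))))).

Definition admissible {X Y : Type} (MX : X -> X -> R -> R) (MY : Y -> Y -> R -> R)
  (M : (X + Y) -> (X + Y) -> R -> R) : Prop :=
  (forall x x' t, 0 <= t -> M (inl x) (inl x') t = MX x x' t) /\
  (forall y y' t, 0 <= t -> M (inr y) (inr y') t = MY y y' t).

Definition M_GH {X Y : Type} (T : R -> R -> R) (MX : X -> X -> R -> R)
  (MY : Y -> Y -> R -> R) (t : R) : Rbar :=
  Lub_Rbar (fun h => exists M : (X + Y) -> (X + Y) -> R -> R,
    fuzzy_metric M T /\ non_archimedean M T /\ admissible MX MY M /\ h = H_M M t).

(* {x_i}_{i=0}^{N-1} is a (t,eps)-net (indices shifted to 0..N-1) *)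
Definition is_net {X : Type} (M : X -> X -> R -> R) (x : nat -> X) (N : nat) (t eps : R) : Prop :=
  forall y, exists i, (i < N)%nat /\ M y (x i) t > 1 - eps.

(* C (a finite set given by a duplicate-free list) covers X by balls *)
Definition ball_cover {X : Type} (M : X -> X -> R -> R) (C : list X) (eps t : R) : Prop :=
  forall y, exists c, In c C /\ ball_f M c eps t y.

Definition is_Cov {X : Type} (M : X -> X -> R -> R) (eps t : R) (k : nat) : Prop :=
  (exists C, NoDup C /\ length C = k /\ ball_cover M C eps t) /\
  (forall C, NoDup C -> ball_cover M C eps t -> (k <= length C)%nat).

Definition diam_s {X : Type} (M : X -> X -> R -> R) (s : R) : R :=
  real (Glb_Rbar (fun r => exists x y : X, r = M x y s)).

(* Main.v *)
Require Import Defs.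
From Stdlib Require Import Reals Lra Lia List Rtopology ClassicalEpsilon.
From Coquelicot Require Import Coquelicot.
Open Scope R_scope.


Section TN.
Variable T : R -> R -> R.
Hypothesis HT : cont_tnorm T.

Lemma T01 a b : in01 a -> in01 b -> in01 (T a b).
Proof. destruct HT as [h _]; auto. Qed.
Lemma Tassoc a b c : in01 a -> in01 b -> in01 c -> T a (T b c) = T (T a b) c.
Proof. destruct HT as [_ [h _]]; auto. Qed.
Lemma Tcomm a b : in01 a -> in01 b -> T a b = T b a.
Proof. destruct HT as [_ [_ [h _]]]; auto. Qed.
Lemma Tcont a b : in01 a -> in01 b -> forall e, 0 < e -> exists d, 0 < d /\
     forall a' b', in01 a' -> in01 b' -> Rabs (a' - a) < d -> Rabs (b' - b) < d ->
       Rabs (T a' b' - T a b) < e.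
Proof. destruct HT as [_ [_ [_ [h _]]]]; auto. Qed.
Lemma T1 a : in01 a -> T a 1 = a.
Proof. destruct HT as [_ [_ [_ [_ [h _]]]]]; auto. Qed.
Lemma Tmono a b c d : in01 a -> in01 b -> in01 c -> in01 d -> a <= c -> b <= d ->
     T a b <= T c d.
Proof. destruct HT as [_ [_ [_ [_ [_ h]]]]]; auto. Qed.

Lemma in01_1 : in01 1. Proof. unfold in01; lra. Qed.
Lemma in01_0 : in01 0. Proof. unfold in01; lra. Qed.
Hint Resolve in01_1 in01_0 T01 : i01.

Lemma T1l a : in01 a -> T 1 a = a.
Proof. intros; rewrite Tcomm; auto with i01; apply T1; auto. Qed.
Lemma Tler a b : in01 a -> in01 b -> T a b <= b.
Proof. intros. rewrite <- (T1l b) at 2; auto. apply Tmono; auto with i01.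
  unfold in01 in *; lra. lra. Qed.
Lemma Tlel a b : in01 a -> in01 b -> T a b <= a.
Proof. intros. rewrite Tcomm; auto. apply Tler; auto. Qed.
Lemma T0r a : in01 a -> T a 0 = 0.
Proof. intros. pose proof (Tler a 0 H in01_0). pose proof (T01 a 0 H in01_0).
  unfold in01 in *; lra. Qed.
Lemma T0l a : in01 a -> T 0 a = 0.
Proof. intros. rewrite Tcomm; auto with i01. apply T0r; auto. Qed.
Lemma Tge0 a b : in01 a -> in01 b -> 0 <= T a b.
Proof. intros; apply T01; auto. Qed.

End TN.


Lemma cv_lb xs x a : Un_cv xs x -> (forall n, a <= xs n) -> a <= x.
Proof. intros H Ha. destruct (Rle_dec a x) as [h|h]; auto.
  destruct (H (a - x)) as [N HN]. lra. specialize (HN N (le_n _)). specialize (Ha N).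
  unfold Rdist in HN. apply Rabs_def2 in HN. lra. Qed.
Lemma cv_ub xs x a : Un_cv xs x -> (forall n, xs n <= a) -> x <= a.
Proof. intros H Ha. destruct (Rle_dec x a) as [h|h]; auto.
  destruct (H (x - a)) as [N HN]. lra. specialize (HN N (le_n _)). specialize (Ha N).
  unfold Rdist in HN. apply Rabs_def2 in HN. lra. Qed.
Lemma cv_const c : Un_cv (fun _ => c) c.
Proof. intros e He. exists 0%nat. intros. unfold Rdist. rewrite Rminus_eq_0, Rabs_R0. lra. Qed.

Section STRICT.
Variable T : R -> R -> R.
Hypothesis HT : cont_tnorm T.
Hypothesis HN : TN1 T.
Hint Resolve in01_1 in01_0 : i01.
Hint Resolve T01 : i01.

Lemma T_lim xs ys x y : Un_cv xs x -> Un_cv ys y -> (forall n, in01 (xs n)) ->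
  (forall n, in01 (ys n)) -> in01 x -> in01 y ->
  Un_cv (fun n => T (xs n) (ys n)) (T x y).
Proof. intros Hx Hy Hxs Hys H1 H2 e He.
  destruct (Tcont T HT x y H1 H2 e He) as [d [Hd Hc]].
  destruct (Hx d Hd) as [N1 HN1]. destruct (Hy d Hd) as [N2 HN2].
  exists (max N1 N2). intros n Hn. unfold Rdist. apply Hc; auto.
  apply HN1; lia. apply HN2; lia. Qed.

Fixpoint pw (u : R) (n : nat) : R := match n with O => u | S n => T (pw u n) u end.

Lemma pw01 u n : in01 u -> in01 (pw u n).
Proof. intros; induction n; simpl; auto with i01. Qed.

Lemma T_strict b u : 0 < b <= 1 -> 0 <= u < 1 -> T b u < b.
Proof. intros Hb Hu.
  assert (B01 : in01 b) by (unfold in01; lra). assert (U01 : in01 u) by (unfold in01; lra).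
  destruct (Rlt_dec (T b u) b) as [h|h]; auto. exfalso.
  assert (Hbu : T b u = b) by (pose proof (Tlel T HT b u B01 U01); lra).
  assert (Hpb : forall n, T b (pw u n) = b).
  { induction n; simpl; auto. rewrite Tassoc; auto using pw01. rewrite IHn; auto. }
  assert (Hdec : Un_decreasing (pw u)).
  { intro n. simpl. apply Tlel; auto using pw01. }
  destruct (decreasing_cv (pw u) Hdec) as [e He].
  { exists 0. intros x [n ->]. pose proof (pw01 u n U01). unfold opp_seq, in01 in *; lra. }
  assert (Hle : e <= u).
  { apply (cv_ub _ _ _ He). intro n. induction n; simpl. lra.
    pose proof (Tlel T HT (pw u n) u (pw01 u n U01) U01). lra. }
  assert (E01 : in01 e).
  { split. apply (cv_lb _ _ _ He). intro n; apply pw01; auto. lra. }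
  assert (Hbe : T b e = b).
  { apply (UL_sequence (fun n => T b (pw u n))).
    - apply T_lim; auto using cv_const, pw01.
    - eapply Un_cv_ext. 2: apply cv_const. intro n; simpl. rewrite Hpb. auto. }
  assert (Heu : T e u = e).
  { apply (UL_sequence (fun n => T (pw u n) u)).
    - apply T_lim; auto using cv_const, pw01.
    - intros eps Heps. destruct (He eps Heps) as [N HN']. exists N. intros n Hn.
      apply (HN' (S n)). lia. }
  assert (Hep : forall n, T e (pw u n) = e).
  { induction n; simpl; auto. rewrite Tassoc; auto using pw01. rewrite IHn; auto. }
  assert (Hee : T e e = e).
  { apply (UL_sequence (fun n => T e (pw u n))).
    - apply T_lim; auto using cv_const, pw01.
    - eapply Un_cv_ext. 2: apply cv_const. intro n; simpl. rewrite Hep. auto. }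
  assert (E1 : in01 (1 - e)) by (unfold in01 in *; lra).
  assert (Hb1e : T b (1 - e) = 0).
  { pose proof (HN b e B01 E01). pose proof (Tge0 T HT b (1 - e) B01 E1). lra. }
  assert (Hhalf : 1 - e < e).
  { destruct (Rlt_dec (1 - e) e) as [h'|h']; auto.
    pose proof (Tmono T HT b e b (1 - e) B01 E01 B01 E1 (Rle_refl _) ltac:(lra)). lra. }
  assert (He1e : T e (1 - e) = 0).
  { pose proof (HN e e E01 E01). pose proof (Tge0 T HT e (1 - e) E01 E1). lra. }
  set (cl := fun x => Rmax 0 (Rmin 1 x)).
  assert (cl01 : forall x, in01 (cl x)).
  { intro x; unfold cl, in01, Rmax, Rmin. repeat destruct Rle_dec; lra. }
  assert (cllip : forall x y, Rabs (cl x - cl y) <= Rabs (x - y)).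
  { intros x y; unfold cl, Rmax, Rmin. repeat destruct Rle_dec;
    unfold Rabs; repeat destruct Rcase_abs; lra. }
  set (f := fun x => T e (cl x) - (1 - e)).
  assert (Hf : continuity f).
  { intro x. apply continuity_pt_locally. intro eps.
    destruct (Tcont T HT e (cl x) E01 (cl01 x) eps (cond_pos eps)) as [d [Hd Hc]].
    exists (mkposreal d Hd). intros y Hy. unfold f.
    replace (T e (cl y) - (1 - e) - (T e (cl x) - (1 - e))) with (T e (cl y) - T e (cl x)) by ring.
    apply Hc; auto. rewrite Rminus_eq_0, Rabs_R0; auto.
    eapply Rle_lt_trans. apply cllip. apply Hy. }
  destruct (IVT f 0 1 Hf) as [z [Hz Hfz]]. lra.
  { unfold f, cl. rewrite Rmin_right, Rmax_left by lra. rewrite T0r; auto. lra. }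
  { unfold f, cl. rewrite Rmin_left, Rmax_right by lra. rewrite T1; auto. lra. }
  unfold f in Hfz.
  assert (Tz : T e (cl z) = 1 - e) by lra.
  rewrite <- Tz in He1e. rewrite Tassoc, Hee in He1e; auto. lra. 
Qed.

End STRICT.


Lemma inf_subseq (P : nat -> Prop) : (forall N, exists p, (N <= p)%nat /\ P p) ->
  exists phi : nat -> nat, (forall k, (phi k < phi (S k))%nat) /\ forall k, P (phi k).
Proof. intros H.
  set (nx := fun N => proj1_sig (constructive_indefinite_description _ (H N))).
  assert (Hnx : forall N, (N <= nx N)%nat /\ P (nx N)).
  { intro N. unfold nx. destruct constructive_indefinite_description; auto. }
  exists (fix phi k := match k with O => nx O | S k => nx (S (phi k)) end).
  split. intro k. simpl. destruct (Hnx (S ((fix phi (k0 : nat) : nat :=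
           match k0 with
           | 0%nat => nx 0%nat
           | S k1 => nx (S (phi k1))
           end) k))); lia.
  intro k; destruct k; apply Hnx. Qed.

Lemma smono phi : (forall k, (phi k < phi (S k))%nat) -> forall a b, (a < b)%nat -> (phi a < phi b)%nat.
Proof. intros H a b Hab. induction Hab. apply H. specialize (H m). lia. Qed.

Section EXTR.
Variable T : R -> R -> R.
Hypothesis HT : cont_tnorm T.
Hypothesis HN : TN1 T.

Lemma extract c k : 0 < c -> 0 <= k < 1 -> forall v : nat -> R, (forall n, c <= v n <= 1) ->
  exists phi : nat -> nat, (forall n, (phi n < phi (S n))%nat) /\
    forall a b, T (v (phi b)) k <= v (phi a).
Proof. intros Hc Hk v Hv.
  destruct (Bolzano_Weierstrass v (fun x => c <= x <= 1) (compact_P3 c 1) Hv) as [L HL].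
  assert (Hnb : forall r, 0 < r -> forall N, exists p, (N <= p)%nat /\ Rabs (v p - L) < r).
  { intros r Hr N. apply (HL (fun x => Rabs (x - L) < r) N). exists (mkposreal r Hr).
    intros y Hy. apply Hy. }
  assert (HL1 : c <= L <= 1).
  { split.
    - destruct (Rle_dec c L); auto. destruct (Hnb (c - L) ltac:(lra) 0%nat) as [p [_ Hp]].
      apply Rabs_def2 in Hp. specialize (Hv p). lra.
    - destruct (Rle_dec L 1); auto. destruct (Hnb (L - 1) ltac:(lra) 0%nat) as [p [_ Hp]].
      apply Rabs_def2 in Hp. specialize (Hv p). lra. }
  assert (L01 : in01 L) by (unfold in01; lra). assert (K01 : in01 k) by (unfold in01; lra).
  pose proof (T_strict T HT HN L k ltac:(lra) Hk) as Hs.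
  set (del := L - T L k).
  destruct (Tcont T HT L k L01 K01 (del / 2) ltac:(unfold del; lra)) as [d [Hd Hcd]].
  destruct (inf_subseq (fun p => Rabs (v p - L) < Rmin d (del / 2))) as [phi [Hphi Hp]].
  { apply Hnb. apply Rmin_pos; unfold del; lra. }
  exists phi. split; auto. intros a b.
  pose proof (Hp a) as Ha. pose proof (Hp b) as Hb.
  assert (Hb' : Rabs (v (phi b) - L) < d) by (eapply Rlt_le_trans; [apply Hb| apply Rmin_l]).
  assert (Ha' : Rabs (v (phi a) - L) < del / 2) by (eapply Rlt_le_trans; [apply Ha| apply Rmin_r]).
  assert (V01 : in01 (v (phi b))) by (specialize (Hv (phi b)); unfold in01; lra).
  specialize (Hcd (v (phi b)) k V01 K01 Hb' ltac:(rewrite Rminus_eq_0, Rabs_R0; lra)).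
  apply Rabs_def2 in Hcd. apply Rabs_def2 in Ha'. unfold del in *. lra.
Qed.

Lemma extract_list c k : 0 < c -> 0 <= k < 1 -> forall (l : list (nat * nat)) (v : nat * nat -> nat -> R),
  (forall p n, c <= v p n <= 1) ->
  exists phi : nat -> nat, (forall n, (phi n < phi (S n))%nat) /\
    forall p, In p l -> forall a b, T (v p (phi b)) k <= v p (phi a).
Proof. intros Hc Hk l v Hv. induction l as [|p l IH].
  - exists (fun n => n). split. intro; lia. intros p [].
  - destruct IH as [phi [Hphi Hl]].
    destruct (extract c k Hc Hk (fun n => v p (phi n))) as [psi [Hpsi Hp]]. intro; apply Hv.
    exists (fun n => phi (psi n)). split.
    + intro n. apply smono; auto.
    + intros q [<-|Hq] a b. apply Hp. apply Hl; auto.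
Qed.

End EXTR.


Fixpoint maxl (f : nat -> R) (l : list nat) : R :=
  match l with nil => 0 | k :: l' => Rmax (f k) (maxl f l') end.

Lemma maxl_nonneg f l : 0 <= maxl f l.
Proof. induction l; simpl. lra. eapply Rle_trans; [apply IHl|apply Rmax_r]. Qed.
Lemma maxl_ge f l k : In k l -> f k <= maxl f l.
Proof. induction l; simpl. intros []. intros [->|H]. apply Rmax_l.
  eapply Rle_trans; [apply IHl; auto|apply Rmax_r]. Qed.
Lemma maxl_cases f l : maxl f l = 0 \/ exists k, In k l /\ maxl f l = f k.
Proof. induction l; simpl. auto. destruct (Rle_dec (f a) (maxl f l)).
  - rewrite Rmax_right by auto. destruct IHl as [H|[k [H1 H2]]]. left; auto. right; exists k; auto.
  - rewrite Rmax_left by lra. right; exists a; auto. Qed.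
Lemma maxl01 f l : (forall k, In k l -> in01 (f k)) -> in01 (maxl f l).
Proof. induction l; simpl; intros H. unfold in01; lra.
  assert (H1 := H a (or_introl eq_refl)). assert (H2 : in01 (maxl f l)) by (apply IHl; auto).
  unfold in01, Rmax in *. destruct Rle_dec; lra. Qed.

Lemma Rmax_close a b a' b' e : Rabs (a' - a) < e -> Rabs (b' - b) < e ->
  Rabs (Rmax a' b' - Rmax a b) < e.
Proof. intros H1 H2. apply Rabs_def2 in H1. apply Rabs_def2 in H2. apply Rabs_def1;
  unfold Rmax; repeat destruct Rle_dec; lra. Qed.

Lemma maxl_leftcont (F : R -> nat -> R) (P : R -> Prop) l t e : 0 < e ->
  (forall k, In k l -> exists d, 0 < d /\ forall u, P u -> t - d < u -> u <= t ->
     Rabs (F u k - F t k) < e) ->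
  exists d, 0 < d /\ forall u, P u -> t - d < u -> u <= t -> Rabs (maxl (F u) l - maxl (F t) l) < e.
Proof. intros He H. induction l as [|k l IH]; simpl.
  - exists 1. split. lra. intros. rewrite Rminus_eq_0, Rabs_R0; auto.
  - destruct (H k (or_introl eq_refl)) as [d1 [Hd1 H1]].
    destruct IH as [d2 [Hd2 H2]]. intros; apply H; simpl; auto.
    exists (Rmin d1 d2). split. apply Rmin_pos; auto. intros u Pu Hu Hut.
    apply Rmax_close. apply H1; auto. pose (Rmin_l d1 d2); lra.
    apply H2; auto. pose (Rmin_r d1 d2); lra. Qed.


Section FM.
Variable T : R -> R -> R.
Hypothesis HT : cont_tnorm T.
Variable X : Type.
Variable M : X -> X -> R -> R.
Hypothesis HM : fuzzy_metric M T.
Hypothesis NA : non_archimedean M T.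

Lemma M01 x y t : 0 <= t -> in01 (M x y t).
Proof. destruct HM as [h _]; auto. Qed.
Lemma Mrefl x t : 0 < t -> M x x t = 1.
Proof. destruct HM as [_ [_ [h _]]]. intros. apply h; auto. Qed.
Lemma Msym x y t : 0 < t -> M x y t = M y x t.
Proof. destruct HM as [_ [_ [_ [h _]]]]. auto. Qed.
Lemma Mna x y z t s : 0 < t -> 0 < s -> T (M x y t) (M y z s) <= M x z (Rmax t s).
Proof. intros. apply Rge_le, NA; auto. Qed.
Lemma Mmono x y t s : 0 < t -> t <= s -> M x y t <= M x y s.
Proof. intros. pose proof (Mna x y y t s H ltac:(lra)) as H1.
  rewrite (Mrefl y s), (T1 T HT) in H1 by (try lra; apply M01; lra).
  rewrite Rmax_right in H1 by auto. auto. Qed.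
End FM.

Lemma KM4_of_NA (T : R -> R -> R) (HT : cont_tnorm T) (X : Type) (M : X -> X -> R -> R) :
  (forall x y t, 0 <= t -> in01 (M x y t)) -> (forall x t, 0 < t -> M x x t = 1) ->
  non_archimedean M T ->
  forall x y z t s, 0 < t -> 0 < s -> T (M x y t) (M y z s) <= M x z (t + s).
Proof. intros H01 Hr NA x y z t s Ht Hs.
  assert (Hmono : forall t s, 0 < t -> t <= s -> M x z t <= M x z s).
  { intros a b Ha Hab. pose proof (NA x z z a b Ha ltac:(lra)) as H.
    rewrite (Hr z b), (T1 T HT) in H by (try lra; apply H01; lra).
    rewrite Rmax_right in H by auto. lra. }
  eapply Rle_trans. apply Rge_le, NA; auto. apply Hmono.
  unfold Rmax; destruct Rle_dec; lra. unfold Rmax; destruct Rle_dec; lra. Qed.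

Lemma Mlc (T : R -> R -> R) (X : Type) (M : X -> X -> R -> R) : fuzzy_metric M T ->
  forall x y t, 0 < t -> forall e, 0 < e -> exists d, 0 < d /\
     forall u, 0 <= u -> t - d < u -> u <= t -> Rabs (M x y u - M x y t) < e.
Proof. intros [_ [_ [_ [_ [_ h]]]]]; auto. Qed.
Lemma Mid (T : R -> R -> R) (X : Type) (M : X -> X -> R -> R) : fuzzy_metric M T ->
  forall x y, (forall t, 0 < t -> M x y t = 1) <-> x = y.
Proof. intros [_ [_ [h _]]]; auto. Qed.
Lemma Mzero0 (T : R -> R -> R) (X : Type) (M : X -> X -> R -> R) : fuzzy_metric M T ->
  forall x y, M x y 0 = 0.
Proof. intros [_ [h _]]; auto. Qed.


Section AC.
Variable T : R -> R -> R.
Hypothesis HT : cont_tnorm T.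
Ltac j01 := repeat (apply (T01 T HT)); assumption.
Lemma TLC a b c : in01 a -> in01 b -> in01 c -> T a (T b c) = T b (T a c).
Proof. intros. rewrite (Tassoc T HT a b c), (Tcomm T HT a b), <- (Tassoc T HT b a c); auto; j01. Qed.
Lemma AC1 a1 a2 a3 a4 a5 : in01 a1 -> in01 a2 -> in01 a3 -> in01 a4 -> in01 a5 ->
  T (T (T a1 a2) a3) (T a4 a5) = T a1 (T (T a2 (T a3 a5)) a4).
Proof. intros.
  rewrite <- (Tassoc T HT (T a1 a2) a3 (T a4 a5)) by j01.
  rewrite <- (Tassoc T HT a1 a2 (T a3 (T a4 a5))) by j01.
  rewrite <- (Tassoc T HT a2 (T a3 a5) a4) by j01.
  rewrite <- (Tassoc T HT a3 a5 a4) by j01.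
  rewrite (Tcomm T HT a5 a4) by j01. auto. Qed.
Lemma AC2 a1 a2 a3 a4 a5 : in01 a1 -> in01 a2 -> in01 a3 -> in01 a4 -> in01 a5 ->
  T (T (T a1 a2) a3) (T a4 a5) = T a3 (T (T a2 (T a1 a4)) a5).
Proof. intros.
  rewrite <- (Tassoc T HT (T a1 a2) a3 (T a4 a5)) by j01.
  rewrite <- (Tassoc T HT a1 a2 (T a3 (T a4 a5))) by j01.
  rewrite <- (Tassoc T HT a2 (T a1 a4) a5) by j01.
  rewrite <- (Tassoc T HT a1 a4 a5) by j01.
  rewrite (TLC a2 a3 (T a4 a5)) by j01.
  rewrite (TLC a1 a3 (T a2 (T a4 a5))) by j01.
  rewrite (TLC a1 a2 (T a4 a5)) by j01. auto. Qed.
End AC.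

Section GLUE.
Variable T : R -> R -> R.
Hypothesis HT : cont_tnorm T.
Variables X Y : Type.
Variable MX : X -> X -> R -> R.
Variable MY : Y -> Y -> R -> R.
Hypothesis HMX : fuzzy_metric MX T.
Hypothesis HMY : fuzzy_metric MY T.
Hypothesis NAX : non_archimedean MX T.
Hypothesis NAY : non_archimedean MY T.
Variables k t0 : R.
Hypothesis Hk : in01 k.
Hypothesis Ht0 : 0 < t0.
Variable N : nat.
Variable xs : nat -> X.
Variable ys : nat -> Y.
Hypothesis Hn1 : forall i j, In i (seq 0 N) -> In j (seq 0 N) -> forall w, t0 < w ->
  T k (MY (ys i) (ys j) w) <= MX (xs i) (xs j) w.
Hypothesis Hn2 : forall i j, In i (seq 0 N) -> In j (seq 0 N) -> forall w, t0 < w ->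
  T k (MX (xs i) (xs j) w) <= MY (ys i) (ys j) w.

Definition g (x : X) (y : Y) u i := T (T (MX x (xs i) u) k) (MY (ys i) y u).
Definition cross x y u := if Rlt_dec t0 u then maxl (g x y u) (seq 0 N) else 0.

Ltac i01 := repeat match goal with
 | |- in01 (T _ _) => apply (T01 T HT)
 | |- in01 (MX _ _ _) => apply (M01 T X MX HMX)
 | |- in01 (MY _ _ _) => apply (M01 T Y MY HMY)
 | |- in01 k => exact Hk
 | |- in01 1 => apply in01_1
 | |- in01 0 => apply in01_0
 | |- in01 (maxl _ _) => apply maxl01; intros
 | |- in01 (g _ _ _ _) => unfold g
 | |- 0 <= _ => lra
 end.
Ltac tm := apply (Tmono T HT); [i01|i01|i01|i01| | ].

Lemma MXna' x y z t s w : 0 < t -> 0 < s -> t <= w -> s <= w -> T (MX x y t) (MX y z s) <= MX x z w.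
Proof. intros. eapply Rle_trans. apply (Mna T X MX NAX); auto.
  apply (Mmono T HT X MX HMX NAX). apply Rmax_case; lra. apply Rmax_case; lra. Qed.
Lemma MYna' x y z t s w : 0 < t -> 0 < s -> t <= w -> s <= w -> T (MY x y t) (MY y z s) <= MY x z w.
Proof. intros. eapply Rle_trans. apply (Mna T Y MY NAY); auto.
  apply (Mmono T HT Y MY HMY NAY). apply Rmax_case; lra. apply Rmax_case; lra. Qed.

Lemma cross01 x y u : 0 <= u -> in01 (cross x y u).
Proof. intros. unfold cross; destruct Rlt_dec; i01. Qed.
Lemma cross0 x y u : u <= t0 -> cross x y u = 0.
Proof. intros. unfold cross; destruct Rlt_dec; auto; lra. Qed.
Lemma cross_nn x y u : 0 <= cross x y u.
Proof. unfold cross; destruct Rlt_dec. apply maxl_nonneg. lra. Qed.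

Lemma crossL x x' y t s : 0 < t -> 0 < s -> T (MX x x' t) (cross x' y s) <= cross x y (Rmax t s).
Proof. intros ht hs. assert (hw1 : t <= Rmax t s) by apply Rmax_l.
  assert (hw2 : s <= Rmax t s) by apply Rmax_r.
  destruct (Rlt_dec t0 s) as [h|h].
  2:{ rewrite (cross0 x' y s) by lra. rewrite (T0r T HT) by i01. apply cross_nn. }
  unfold cross. destruct (Rlt_dec t0 s) as [_|]; [|lra].
  destruct (Rlt_dec t0 (Rmax t s)) as [_|]; [|lra].
  destruct (maxl_cases (g x' y s) (seq 0 N)) as [H0|[i [Hi Heq]]].
  { rewrite H0, (T0r T HT) by i01. apply maxl_nonneg. }
  rewrite Heq. eapply Rle_trans; [|apply (maxl_ge _ _ i Hi)]. unfold g.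
  rewrite (Tassoc T HT (MX x x' t) (T (MX x' (xs i) s) k) (MY (ys i) y s)) by i01.
  rewrite (Tassoc T HT (MX x x' t) (MX x' (xs i) s) k) by i01.
  tm. tm. apply MXna'; lra. lra. apply (Mmono T HT Y MY HMY NAY); lra.
Qed.

Lemma crossR x y y' t s : 0 < t -> 0 < s -> T (MY y y' t) (cross x y' s) <= cross x y (Rmax t s).
Proof. intros ht hs. assert (hw1 : t <= Rmax t s) by apply Rmax_l.
  assert (hw2 : s <= Rmax t s) by apply Rmax_r.
  destruct (Rlt_dec t0 s) as [h|h].
  2:{ rewrite (cross0 x y' s) by lra. rewrite (T0r T HT) by i01. apply cross_nn. }
  unfold cross. destruct (Rlt_dec t0 s) as [_|]; [|lra].
  destruct (Rlt_dec t0 (Rmax t s)) as [_|]; [|lra].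
  destruct (maxl_cases (g x y' s) (seq 0 N)) as [H0|[i [Hi Heq]]].
  { rewrite H0, (T0r T HT) by i01. apply maxl_nonneg. }
  rewrite Heq. eapply Rle_trans; [|apply (maxl_ge _ _ i Hi)]. unfold g.
  rewrite (Tcomm T HT (MY y y' t)) by i01.
  rewrite <- (Tassoc T HT (T (MX x (xs i) s) k) (MY (ys i) y' s) (MY y y' t)) by i01.
  tm. tm. apply (Mmono T HT X MX HMX NAX); lra. lra.
  rewrite (Msym T Y MY HMY y y' t) by lra. apply MYna'; lra.
Qed.

Lemma crossX x x' y t s : 0 < t -> 0 < s -> T (cross x y t) (cross x' y s) <= MX x x' (Rmax t s).
Proof. intros ht hs. assert (hw1 : t <= Rmax t s) by apply Rmax_l.
  assert (hw2 : s <= Rmax t s) by apply Rmax_r.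
  destruct (Rlt_dec t0 t) as [h1|h1].
  2:{ rewrite (cross0 x y t) by lra. rewrite (T0l T HT) by (apply cross01; lra). i01. apply (M01 T X MX HMX). lra. }
  destruct (Rlt_dec t0 s) as [h2|h2].
  2:{ rewrite (cross0 x' y s) by lra. rewrite (T0r T HT) by (apply cross01; lra). apply (M01 T X MX HMX). lra. }
  unfold cross. destruct (Rlt_dec t0 t) as [_|]; [|lra]. destruct (Rlt_dec t0 s) as [_|]; [|lra].
  destruct (maxl_cases (g x y t) (seq 0 N)) as [H0|[i [Hi Heq]]].
  { rewrite H0, (T0l T HT) by i01. apply (M01 T X MX HMX). lra. }
  destruct (maxl_cases (g x' y s) (seq 0 N)) as [H1|[j [Hj Heq1]]].
  { rewrite H1, (T0r T HT) by i01. apply (M01 T X MX HMX). lra. }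
  rewrite Heq, Heq1. unfold g. set (w := Rmax t s) in *.
  apply Rle_trans with (T (T (T (MX x (xs i) t) k) (MY (ys i) y t)) (T (MX x' (xs j) s) (MY (ys j) y s))).
  { tm. lra. tm. apply (Tlel T HT); i01. lra. }
  rewrite (AC1 T HT) by i01.
  eapply Rle_trans; [|apply (MXna' x (xs i) x' t w w); lra].
  tm. lra.
  eapply Rle_trans; [|apply (MXna' (xs i) (xs j) x' w s w); lra].
  tm. eapply Rle_trans; [|apply Hn1; auto; lra]. tm. lra.
  rewrite (Msym T Y MY HMY (ys j) y s) by lra. apply MYna'; lra.
  rewrite (Msym T X MX HMX x' (xs j) s) by lra. lra.
Qed.

Lemma crossY x y y' t s : 0 < t -> 0 < s -> T (cross x y t) (cross x y' s) <= MY y y' (Rmax t s).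
Proof. intros ht hs. assert (hw1 : t <= Rmax t s) by apply Rmax_l.
  assert (hw2 : s <= Rmax t s) by apply Rmax_r.
  destruct (Rlt_dec t0 t) as [h1|h1].
  2:{ rewrite (cross0 x y t) by lra. rewrite (T0l T HT) by (apply cross01; lra). apply (M01 T Y MY HMY). lra. }
  destruct (Rlt_dec t0 s) as [h2|h2].
  2:{ rewrite (cross0 x y' s) by lra. rewrite (T0r T HT) by (apply cross01; lra). apply (M01 T Y MY HMY). lra. }
  unfold cross. destruct (Rlt_dec t0 t) as [_|]; [|lra]. destruct (Rlt_dec t0 s) as [_|]; [|lra].
  destruct (maxl_cases (g x y t) (seq 0 N)) as [H0|[i [Hi Heq]]].
  { rewrite H0, (T0l T HT) by i01. apply (M01 T Y MY HMY). lra. }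
  destruct (maxl_cases (g x y' s) (seq 0 N)) as [H1|[j [Hj Heq1]]].
  { rewrite H1, (T0r T HT) by i01. apply (M01 T Y MY HMY). lra. }
  rewrite Heq, Heq1. unfold g. set (w := Rmax t s) in *.
  apply Rle_trans with (T (T (T (MX x (xs i) t) k) (MY (ys i) y t)) (T (MX x (xs j) s) (MY (ys j) y' s))).
  { tm. lra. tm. apply (Tlel T HT); i01. lra. }
  rewrite (AC2 T HT) by i01.
  eapply Rle_trans; [|apply (MYna' y (ys i) y' t w w); lra].
  tm. rewrite (Msym T Y MY HMY (ys i) y t) by lra. lra.
  eapply Rle_trans; [|apply (MYna' (ys i) (ys j) y' w s w); lra].
  tm. eapply Rle_trans; [|apply Hn2; auto; lra]. tm. lra.
  rewrite (Msym T X MX HMX x (xs i) t) by lra. apply MXna'; lra.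
  lra.
Qed.


Lemma cross_lc x y t : 0 < t -> forall e, 0 < e -> exists d, 0 < d /\
     forall u, 0 <= u -> t - d < u -> u <= t -> Rabs (cross x y u - cross x y t) < e.
Proof. intros ht e he. destruct (Rlt_dec t0 t) as [h|h].
  - destruct (maxl_leftcont (fun u => g x y u) (fun u => t0 < u) (seq 0 N) t e he) as [d [Hd Hc]].
    { intros i Hi. unfold g.
      destruct (Tcont T HT (T (MX x (xs i) t) k) (MY (ys i) y t) ltac:(i01) ltac:(i01) e he) as [d1 [Hd1 H1]].
      destruct (Tcont T HT (MX x (xs i) t) k ltac:(i01) ltac:(i01) d1 Hd1) as [d2 [Hd2 H2]].
      destruct (Mlc T X MX HMX x (xs i) t ht d2 Hd2) as [d3 [Hd3 H3]].
      destruct (Mlc T Y MY HMY (ys i) y t ht d1 Hd1) as [d4 [Hd4 H4]].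
      exists (Rmin d3 d4). split. apply Rmin_pos; auto. intros u hu h1 h2.
      pose proof (Rmin_l d3 d4). pose proof (Rmin_r d3 d4).
      apply H1; try i01. apply H2; try i01. apply H3; lra.
      rewrite Rminus_eq_0, Rabs_R0; auto. apply H4; lra. }
    exists (Rmin d (t - t0)). split. apply Rmin_pos; lra. intros u hu h1 h2.
    pose proof (Rmin_l d (t - t0)). pose proof (Rmin_r d (t - t0)).
    unfold cross. destruct (Rlt_dec t0 u); [|lra]. destruct (Rlt_dec t0 t); [|lra].
    apply Hc; lra.
  - exists t. split; auto. intros u hu h1 h2. rewrite !cross0 by lra.
    rewrite Rminus_eq_0, Rabs_R0; auto.
Qed.

Lemma cross_lbX x i t : t0 < t -> In i (seq 0 N) -> T (MX x (xs i) t) k <= cross x (ys i) t.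
Proof. intros. unfold cross. destruct Rlt_dec; [|lra].
  eapply Rle_trans; [|apply (maxl_ge _ _ i H0)]. unfold g.
  rewrite (Mrefl T Y MY HMY) by lra. rewrite (T1 T HT) by i01. lra. Qed.
Lemma cross_lbY y i t : t0 < t -> In i (seq 0 N) -> T k (MY (ys i) y t) <= cross (xs i) y t.
Proof. intros. unfold cross. destruct Rlt_dec; [|lra].
  eapply Rle_trans; [|apply (maxl_ge _ _ i H0)]. unfold g.
  rewrite (Mrefl T X MX HMX) by lra. rewrite (T1l T HT) by i01. lra. Qed.

Definition Mg (p q : X + Y) (u : R) : R :=
  match p, q with
  | inl x, inl x' => MX x x' u
  | inr y, inr y' => MY y y' u
  | inl x, inr y => cross x y u
  | inr y, inl x => cross x y u
  end.

Lemma Mg01 p q u : 0 <= u -> in01 (Mg p q u).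
Proof. intros; destruct p, q; simpl; try apply cross01; auto; i01. Qed.
Lemma Mgrefl p u : 0 < u -> Mg p p u = 1.
Proof. intros; destruct p; simpl. apply (Mrefl T X MX HMX); auto. apply (Mrefl T Y MY HMY); auto. Qed.

Lemma Mg_na : non_archimedean Mg T.
Proof. intros p q r t s ht hs. apply Rle_ge.
  destruct p as [x|y], q as [x'|y'], r as [x''|y'']; simpl.
  - apply (Mna T X MX NAX); auto.
  - apply crossL; auto.
  - apply crossX; auto.
  - rewrite (Tcomm T HT) by (try apply cross01; i01).
    rewrite (Msym T Y MY HMY y' y'' s), Rmax_comm by lra. apply crossR; auto.
  - rewrite (Tcomm T HT) by (try apply cross01; i01).
    rewrite (Msym T X MX HMX x' x'' s), Rmax_comm by lra. apply crossL; auto.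
  - apply crossY; auto.
  - apply crossR; auto.
  - apply (Mna T Y MY NAY); auto.
Qed.

Lemma Mg_fm : fuzzy_metric Mg T.
Proof. split; [|split; [|split; [|split; [|split]]]].
  - apply Mg01.
  - intros [x|y] [x'|y']; simpl. apply (Mzero0 T X MX HMX). apply cross0; lra. apply cross0; lra.
    apply (Mzero0 T Y MY HMY).
  - intros [x|y] [x'|y']; simpl.
    + rewrite (Mid T X MX HMX). split; intro H. congruence. injection H; auto.
    + split; intro H. specialize (H t0 Ht0). rewrite cross0 in H; lra. discriminate.
    + split; intro H. specialize (H t0 Ht0). rewrite cross0 in H; lra. discriminate.
    + rewrite (Mid T Y MY HMY). split; intro H. congruence. injection H; auto.
  - intros [x|y] [x'|y'] t ht; simpl; auto. apply (Msym T X MX HMX); auto. apply (Msym T Y MY HMY); auto.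
  - apply (KM4_of_NA T HT). apply Mg01. apply Mgrefl. apply Mg_na.
  - intros [x|y] [x'|y'] t ht; simpl. apply (Mlc T X MX HMX); auto. apply cross_lc; auto.
    apply cross_lc; auto. apply (Mlc T Y MY HMY); auto.
Qed.

Lemma Mg_adm : admissible MX MY Mg.
Proof. split; intros; reflexivity. Qed.

Lemma lub_real_ge (E : R -> Prop) v : E v -> (forall u, E u -> u <= 1) -> v <= real (Lub_Rbar E).
Proof. intros Hv Hb. destruct (Lub_Rbar_correct E) as [H1 H2].
  specialize (H2 (Finite 1) Hb). specialize (H1 v Hv).
  destruct (Lub_Rbar E); simpl in *; auto; contradiction. Qed.
Lemma glb_real_ge (E : R -> Prop) h : (exists r, E r) -> (forall r, E r -> h <= r) -> h <= real (Glb_Rbar E).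
Proof. intros [r Hr] Hb. destruct (Glb_Rbar_correct E) as [H1 H2].
  specialize (H2 (Finite h) Hb). specialize (H1 r Hr).
  destruct (Glb_Rbar E); simpl in *; auto; contradiction. Qed.

Lemma H_lb t h : t0 < t -> inhabited X -> inhabited Y ->
  (forall x, exists i, In i (seq 0 N) /\ h <= T (MX x (xs i) t) k) ->
  (forall y, exists i, In i (seq 0 N) /\ h <= T k (MY y (ys i) t)) ->
  h <= H_M Mg t.
Proof. intros ht [x0] [y0] HX HY. unfold H_M. apply Rmin_glb.
  - apply glb_real_ge. eexists; exists x0; reflexivity.
    intros r [a ->]. destruct (HX a) as [i [Hi Hh]].
    eapply Rle_trans; [apply Hh|]. eapply Rle_trans; [apply (cross_lbX a i t); auto|].
    apply lub_real_ge. exists (ys i); reflexivity.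
    intros u [b ->]. apply (Mg01 (inl a) (inr b) t); lra.
  - apply glb_real_ge. eexists; exists y0; reflexivity.
    intros r [b ->]. destruct (HY b) as [i [Hi Hh]].
    eapply Rle_trans; [apply Hh|]. rewrite (Msym T Y MY HMY) by lra.
    eapply Rle_trans; [apply (cross_lbY b i t); auto|].
    apply lub_real_ge. exists (xs i); reflexivity.
    intros u [a ->]. apply (Mg01 (inl a) (inr b) t); lra.
Qed.

Lemma glue_main t h : t0 < t -> inhabited X -> inhabited Y ->
  (forall x, exists i, In i (seq 0 N) /\ h <= T (MX x (xs i) t) k) ->
  (forall y, exists i, In i (seq 0 N) /\ h <= T k (MY y (ys i) t)) ->
  Rbar_le h (M_GH T MX MY t).
Proof. intros. unfold M_GH. destruct (Lub_Rbar_correct (fun h0 => exists M : X + Y -> X + Y -> R -> R,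
    fuzzy_metric M T /\ non_archimedean M T /\ admissible MX MY M /\ h0 = H_M M t)) as [H5 _].
  eapply Rbar_le_trans with (y := Finite (H_M Mg t)). simpl. apply H_lb; auto.
  apply H5. exists Mg. split. apply Mg_fm. split. apply Mg_na. split. apply Mg_adm. auto.
Qed.

End GLUE.


Lemma glb_real_le (E : R -> Prop) r : E r -> (forall u, E u -> 0 <= u) -> real (Glb_Rbar E) <= r.
Proof. intros Hr Hb. destruct (Glb_Rbar_correct E) as [H1 H2].
  specialize (H2 (Finite 0) Hb). specialize (H1 r Hr).
  destruct (Glb_Rbar E); simpl in *; auto; contradiction. Qed.

Theorem mainTheorem6 (T : R -> R -> R) (X : nat -> Type)
  (M : forall n, X n -> X n -> R -> R) :
  cont_tnorm T ->
  (forall n, inhabited (X n)) ->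
  (forall n, fuzzy_metric (M n) T) ->
  (forall n, non_archimedean (M n) T) ->
  (forall n, fcompact (M n)) ->
  (* (1) *)
  TN1 T ->
  (* (2) *)
  (exists C : R -> R,
     (forall s s', 0 < s -> s <= s' -> C s <= C s') /\
     (forall s, 0 < s -> forall e, 0 < e -> exists d, 0 < d /\
        forall u, 0 < u -> s - d < u -> u <= s -> Rabs (C u - C s) < e) /\
     (forall s n, 0 < s -> 0 < C s /\ C s <= 1 /\ C s <= diam_s (M n) s)) ->
  (* (3) and (4), sharing the bound N(eps,t) *)
  (exists Nf : R -> R -> nat,
     (forall t eps, 0 < t -> 0 < eps < 1 ->
        forall n, exists k, is_Cov (M n) eps t k /\ (k <= Nf eps t)%nat) /\
     (forall t eps, 0 < t -> 0 < eps < 1 ->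
        exists x : forall n, nat -> X n,
          (forall n, is_net (M n) (x n) (Nf eps t) t eps) /\
          (forall n m s i j, t < s -> (i < Nf eps t)%nat -> (j < Nf eps t)%nat ->
             M n (x n i) (x n j) s < M m (x m i) (x m j) s ->
             M n (x n i) (x n j) s / T (M m (x m i) (x m j) s) (1 - eps) >=
             M n (x n i) (x n j) t / T (M m (x m i) (x m j) t) (1 - eps)))) ->
  forall t eps, 0 < t -> 0 < eps < 1 ->
    exists phi : nat -> nat, (forall k, (phi k < phi (S k))%nat) /\
      forall j k, Rbar_lt (T (1 - eps) (1 - eps)) (M_GH T (M (phi j)) (M (phi k)) t).
Proof.
  intros HT Hinh HM HNA Hcomp HN [C [Cmono [Clc HC]]] [Nf [Hcov Hnet]] t eps ht heps.
  set (t0 := t / 2). assert (ht0 : 0 < t0) by (unfold t0; lra). assert (htt : t0 < t) by (unfold t0; lra).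
  set (c := C t0). destruct (HC t0 0%nat ht0) as [hc0 [hc1 _]]. fold c in hc0, hc1.
  assert (E01 : in01 (1 - eps)) by (unfold in01; lra).
  assert (Hlt1 : T (1 - eps) (1 - eps) < 1).
  { pose proof (Tlel T HT (1 - eps) (1 - eps) E01 E01). lra. }
  destruct (Tcont T HT 1 1 in01_1 in01_1 (1 - T (1 - eps) (1 - eps)) ltac:(lra)) as [d1 [Hd1 H1]].
  assert (C01 : in01 c) by (unfold in01; lra).
  destruct (Tcont T HT c 1 C01 in01_1 c hc0) as [d2 [Hd2 H2]].
  set (e0 := Rmin (Rmin d1 d2) 1 / 2).
  assert (He0 : 0 < e0 /\ e0 < 1 /\ e0 < d1 /\ e0 < d2).
  { unfold e0. pose proof (Rmin_l (Rmin d1 d2) 1). pose proof (Rmin_r (Rmin d1 d2) 1).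
    pose proof (Rmin_l d1 d2). pose proof (Rmin_r d1 d2).
    assert (0 < Rmin (Rmin d1 d2) 1) by (repeat apply Rmin_pos; lra). lra. }
  set (ka := 1 - e0).
  assert (K01 : in01 ka) by (unfold in01, ka; lra).
  assert (Hkk : T (1 - eps) (1 - eps) < T ka ka).
  { specialize (H1 ka ka K01 K01). rewrite (T1 T HT) in H1 by apply in01_1.
    assert (Rabs (ka - 1) < d1) by (unfold ka; rewrite Rabs_left by lra; lra).
    specialize (H1 H H). apply Rabs_def2 in H1. lra. }
  assert (Hck : 0 < T c ka).
  { specialize (H2 c ka C01 K01). rewrite (T1 T HT) in H2 by auto.
    assert (Rabs (ka - 1) < d2) by (unfold ka; rewrite Rabs_left by lra; lra).
    specialize (H2 ltac:(rewrite Rminus_eq_0, Rabs_R0; lra) H). apply Rabs_def2 in H2. lra. }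
  destruct (Hnet t0 e0 ht0 ltac:(lra)) as [x [Hx Hratio]].
  fold ka in Hratio.
  set (Nn := Nf e0 t0) in *.
  assert (Hlow : forall n i j, c <= M n (x n i) (x n j) t0 <= 1).
  { intros n i j. split.
    - destruct (HC t0 n ht0) as [_ [_ Hd]]. eapply Rle_trans. apply Hd.
      unfold diam_s. apply glb_real_le. exists (x n i), (x n j). reflexivity.
      intros u [a [b ->]]. apply (M01 T (X n) (M n) (HM n)); lra.
    - apply (M01 T (X n) (M n) (HM n)); lra. }
  destruct (extract_list T HT HN c ka hc0 ltac:(unfold ka; lra)
     (list_prod (seq 0 Nn) (seq 0 Nn))
     (fun p n => M n (x n (fst p)) (x n (snd p)) t0) ltac:(intros; apply Hlow)) as [phi [Hphi Hgood]].
  assert (Hnc : forall n m i j, In i (seq 0 Nn) -> In j (seq 0 Nn) ->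
     T (M m (x m i) (x m j) t0) ka <= M n (x n i) (x n j) t0 ->
     forall w, t0 < w -> T ka (M m (x m i) (x m j) w) <= M n (x n i) (x n j) w).
  { intros n m i j Hi Hj Hb w hw.
    apply in_seq in Hi. apply in_seq in Hj.
    assert (A0 : in01 (M n (x n i) (x n j) w)) by (apply (M01 T (X n) (M n) (HM n)); lra).
    assert (B0 : in01 (M m (x m i) (x m j) w)) by (apply (M01 T (X m) (M m) (HM m)); lra).
    assert (B00 : in01 (M m (x m i) (x m j) t0)) by (apply (M01 T (X m) (M m) (HM m)); lra).
    rewrite (Tcomm T HT) by auto.
    destruct (Rlt_dec (M n (x n i) (x n j) w) (M m (x m i) (x m j) w)) as [hlt|hge].
    - specialize (Hratio n m w i j hw ltac:(lia) ltac:(lia) hlt).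
      set (a := M n (x n i) (x n j) w) in *. set (b := M m (x m i) (x m j) w) in *.
      set (a0 := M n (x n i) (x n j) t0) in *. set (b0 := M m (x m i) (x m j) t0) in *.
      assert (Db0 : T c ka <= T b0 ka).
      { apply (Tmono T HT); auto. apply Hlow. lra. }
      assert (Db : T b0 ka <= T b ka).
      { apply (Tmono T HT); auto. apply (Mmono T HT (X m) (M m) (HM m) (HNA m)); lra. lra. }
      assert (R0 : 1 <= a0 / T b0 ka).
      { apply (Rmult_le_reg_r (T b0 ka)). lra. field_simplify; lra. }
      assert (R1 : 1 <= a / T b ka) by lra.
      replace a with ((a / T b ka) * T b ka) by (field; lra). nra.
    - pose proof (Tlel T HT (M m (x m i) (x m j) w) ka B0 K01). lra. }
  exists phi. split; auto. intros j k.
  eapply Rbar_lt_le_trans with (y := Finite (T ka ka)). simpl; auto.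
  apply (glue_main T HT (X (phi j)) (X (phi k)) (M (phi j)) (M (phi k)) (HM _) (HM _)
           (HNA _) (HNA _) ka t0 K01 ht0 Nn (x (phi j)) (x (phi k))); auto.
  - intros i i' Hi Hi' w hw. apply Hnc; auto.
    apply (Hgood (i, i')); auto. apply in_prod; auto.
  - intros i i' Hi Hi' w hw. apply Hnc; auto.
    apply (Hgood (i, i')); auto. apply in_prod; auto.
  - intro y. destruct (Hx (phi j) y) as [i [Hi Hy]]. exists i. split. apply in_seq; lia.
    apply (Tmono T HT); auto. apply (M01 T _ _ (HM _)); lra.
    eapply Rle_trans with (M (phi j) y (x (phi j) i) t0). unfold ka; lra.
    apply (Mmono T HT _ _ (HM _) (HNA _)); lra. lra.
  - intro y. destruct (Hx (phi k) y) as [i [Hi Hy]]. exists i. split. apply in_seq; lia.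
    apply (Tmono T HT); auto. apply (M01 T _ _ (HM _)); lra. lra.
    eapply Rle_trans with (M (phi k) y (x (phi k) i) t0). unfold ka; lra.
    apply (Mmono T HT _ _ (HM _) (HNA _)); lra.
Qed.
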